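(* Consider the system $\dot x=f(x)+\sum_{p=1}^d g_p(x)\,u[\alpha^p]$ whose state trajectories evolve in the box $\mathcal{X}\in\mathbb{IR}^n$, with controls in the box $\mathcal{U}\in\mathbb{IR}^m$, where $f=[f_k]$, $g_p=[g_{p,k}]:\mathbb{R}^n\to\mathbb{R}^n$ are unknown and each $f_k$, $g_{p,k}$ is Lipschitz on $\mathcal{X}$ with respect to $\|\cdot\|_w$ with Lipschitz constant at most the known bound $\overline{f}_k$, resp. $\overline{g}_{p,k}$. Let $\mathscr{T}_j$, $M$, $x^0$ and $\boldsymbol{h}$ be as in the context. Let $\Delta t>0$, $u^q\in\mathcal{U}$ be a constant control applied on $[t_q,t_{q+1}]$ with $t_{q+1}=t_q+\Delta t$, and let $\mathcal{R}^q\in\mathbb{IR}^n$ be a set of possible states at time $t_q$. Let $\mathcal{P}^q\in\mathbb{IR}^n$ satisfy $\mathcal{R}^q+[0,\Delta t]\,\boldsymbol{h}(\mathcal{P}^q,u^q)\subseteq\mathcal{P}^q$. Let $\mathcal{J}^f,\mathcal{J}^{g_p}\in\mathbb{IR}^{n\times n}$ have entries $\mathcal{J}^f_{k,l}=[-1,1]\,w_l\,\overline{f}_k$ and $\mathcal{J}^{g_p}_{k,l}=[-1,1]\,w_l\,\overline{g}_{p,k}$. Then $$\mathcal{R}^{q+1}=\mathcal{R}^q+\boldsymbol{h}(\mathcal{R}^q,u^q)\,\Delta t+\Big(\mathcal{J}^f+\sum_{p=1}^d\mathcal{J}^{g_p}u^q[\alpha^p]\Big)\boldsymbol{h}(\mathcal{P}^q,u^q)\,\frac{\Delta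 t^2}{2}$$ satisfies $\mathcal{R}^{q+1}\supseteq\{x(t_{q+1};u^q,x^q)\in\mathcal{X}: x^q\in\mathcal{R}^q\}$, where $x(t_{q+1};u^q,x^q)$ denotes the state at time $t_{q+1}$ of the solution of the system starting from $x^q$ at $t_q$ under the constant control $u^q$.
   Context: Notation: $\mathbb{IR}$ is the set of closed bounded real intervals; $\mathbb{IR}^n$, $\mathbb{IR}^{n\times n}$, $\mathbb{IR}^{d\times n}$ interval vectors/matrices; interval arithmetic (including interval matrix–vector products), intersections and inclusions are standard and componentwise; reals are identified with degenerate intervals. For $u\in\mathbb{R}^m$, $\alpha\in\mathbb{N}^m$, $u[\alpha]=\prod_i u_i^{\alpha_i}$; $\alpha^1,\dots,\alpha^d$ are known. $\|x\|_w=\sqrt{\sum_i(w_ix_i)^2}$ for a fixed $w\in\mathbb{R}^n_{>0}$; $\boldsymbol{\eta}^w$ is a fixed interval extension of $\|\cdot\|_w$, i.e. $\boldsymbol{\eta}^w(\mathcal{B})\supseteq\{\|y\|_w:y\in\mathcal{B}\}$. Data: $\mathscr{T}_j=\{(x^i,\dot x^i,u^i)\}_{i=1}^{j-1}$ with $x^i\in\mathcal{X}$, $u^i\in\mathcal{U}$, $\dot x^i=f(x^i)+\sum_pg_p(x^i)u^i[\alpha^p]$; $M>0$ and $x^0\in\mathcal{X}$ with $|f_k(x^0)|\le M$, $|g_{p,k}(x^0)|\le M$. Interval functions from a set $\mathscr{E}=\{(x^i,C_{\mathcal{F}^i},C_{\mathcal{G}^i})\}_i$: $\boldsymbol{f}_k(\mathcal{A})=\bigcap_i(C_{\mathcal{F}^i_k}+[-1,1]\overline{f}_k\boldsymbol{\eta}^w(\mathcal{A}-x^i))$,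 $\boldsymbol{g}_{p,k}(\mathcal{A})=\bigcap_i(C_{\mathcal{G}^i_{p,k}}+[-1,1]\overline{g}_{p,k}\boldsymbol{\eta}^w(\mathcal{A}-x^i))$. Contraction of $(x^i,\dot x^i,u^i)$ with $\mathcal{F}^i,\mathcal{G}^i$: for each $k$, $C_{\mathcal{F}^i_k}=\mathcal{F}^i_k\cap(\dot x^i_k-\sum_p\mathcal{G}^i_{p,k}u^i[\alpha^p])$, $\mathcal{S}_{0,k}=(\dot x^i_k-C_{\mathcal{F}^i_k})\cap\sum_p\mathcal{G}^i_{p,k}u^i[\alpha^p]$, and for $p=1,\dots,d$: $C_{\mathcal{G}^i_{p,k}}=((\mathcal{S}_{p-1,k}-\sum_{l>p}\mathcal{G}^i_{l,k}u^i[\alpha^l])\cap\mathcal{G}^i_{p,k}u^i[\alpha^p])/u^i[\alpha^p]$ if $u^i[\alpha^p]\neq0$, else $\mathcal{G}^i_{p,k}$; $\mathcal{S}_{p,k}=(\mathcal{S}_{p-1,k}-C_{\mathcal{G}^i_{p,k}}u^i[\alpha^p])\cap\sum_{l>p}\mathcal{G}^i_{l,k}u^i[\alpha^l]$. Refinement of $\mathscr{E}$ at $(x^i,\dot x^i,u^i)$: compute $\mathcal{F}^i=[\boldsymbol{f}_k(\{x^i\})]$, $\mathcal{G}^i=[\boldsymbol{g}_{p,k}(\{x^i\})]$ from the current $\mathscr{E}$, contract, and store $(x^i,C_{\mathcal{F}^i},C_{\mathcal{G}^i})$ (replacing any previous triple with index $i$). Construction: start with $\mathscr{E}=\{(x^0,[-M,M]^n,[-M,M]^{d\times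 n})\}$; for $i=1,\dots,j-1$ refine at $(x^i,\dot x^i,u^i)$, then repeatedly refine at all processed points $l\le i$ until $\mathscr{E}$ no longer changes; the result is $\mathscr{E}_j$. Finally $\boldsymbol{f},\boldsymbol{g}_p$ are the interval functions from $\mathscr{E}_j$ and $\boldsymbol{h}(\mathcal{A},u)=\boldsymbol{f}(\mathcal{A})+\sum_p\boldsymbol{g}_p(\mathcal{A})u[\alpha^p]$. *)

(* Defs.v *)
From HB Require Import structures.
From mathcomp Require Import all_boot all_order all_algebra.
From mathcomp Require Import all_classical all_reals all_analysis.
Set Implicit Arguments. Unset Strict Implicit. Unset Printing Implicit Defensive.
Import Order.TTheory GRing.Theory Num.Theory.
Local Open Scope ring_scope.

Section Intervals.
Variable R : realType.

Record ival := Ival { ilo : R; ihi : R }.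

Definition ipt (c : R) : ival := Ival c c.
Definition iwf (A : ival) : bool := ilo A <= ihi A.
Definition imem (A : ival) (x : R) : bool := (ilo A <= x) && (x <= ihi A).
Definition iincl (A B : ival) : bool := (ilo B <= ilo A) && (ihi A <= ihi B).
Definition iadd (A B : ival) : ival := Ival (ilo A + ilo B) (ihi A + ihi B).
Definition ineg (A : ival) : ival := Ival (- ihi A) (- ilo A).
Definition isub (A B : ival) : ival := iadd A (ineg B).
Definition imul (A B : ival) : ival :=
  let p1 := ilo A * ilo B in let p2 := ilo A * ihi B in
  let p3 := ihi A * ilo B in let p4 := ihi A * ihi B in
  Ival (Num.min (Num.min p1 p2) (Num.min p3 p4))
       (Num.max (Num.max p1 p2) (Num.max p3 p4)).
Definition icap (A B : ival) : ival :=
  Ival (Num.max (ilo A) (ilo B)) (Num.min (ihi A) (ihi B)).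
Definition idivr (A : ival) (c : R) : ival := imul A (ipt c^-1).

Definition isum (I : finType) (P : pred I) (F : I -> ival) : ival :=
  \big[iadd/ipt 0]_(i | P i) F i.

Definition inbox (n : nat) (B : 'I_n -> ival) (y : 'I_n -> R) : Prop :=
  forall l, imem (B l) (y l).
Definition boxwf (n : nat) (B : 'I_n -> ival) : Prop := forall l, iwf (B l).

Definition wnorm (n : nat) (w : 'I_n -> R) (y : 'I_n -> R) : R :=
  Num.sqrt (\sum_(i < n) (w i * y i) ^+ 2).

Definition umon (m : nat) (u : 'I_m -> R) (a : 'I_m -> nat) : R :=
  \prod_(i < m) u i ^+ a i.
End Intervals.

Section Construction.
Variable R : realType.
Variables (n m d : nat).
Variable alpha : 'I_d -> 'I_m -> nat.
Variable fbar : 'I_n -> R.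
Variable gbar : 'I_d -> 'I_n -> R.
Variable eta : ('I_n -> ival R) -> ival R.   (* interval extension of ||.||_w *)

Record entry := Entry {
  ept : 'I_n -> R;
  eCF : 'I_n -> ival R;
  eCG : 'I_d -> 'I_n -> ival R }.

(* the set E: the initial triple (index 0) together with the triples   *)
(* stored at data indices i >= 1 (None = no triple with index i yet).   *)
Record Estate := Estate_ { E0 : entry; Emap : nat -> option entry }.

Definition eterm (x : 'I_n -> R) (C : ival R) (L : R) (A : 'I_n -> ival R) :=
  iadd C (imul (imul (Ival (-1) 1) (ipt L))
               (eta (fun l => isub (A l) (ipt (x l))))).

Definition Ecap (N : nat) (E : Estate) (sel : entry -> ival R) (L : R)
    (A : 'I_n -> ival R) : ival R :=
  foldr (fun i acc => if Emap E i is Some e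
                      then icap (eterm (ept e) (sel e) L A) acc else acc)
        (eterm (ept (E0 E)) (sel (E0 E)) L A) (iota 1 N).

Definition fI N E (k : 'I_n) A := Ecap N E (fun e => eCF e k) (fbar k) A.
Definition gI N E (p : 'I_d) (k : 'I_n) A :=
  Ecap N E (fun e => eCG e p k) (gbar p k) A.
Definition hI N E (A : 'I_n -> ival R) (u : 'I_m -> R) (k : 'I_n) : ival R :=
  iadd (fI N E k A) (isum predT (fun p : 'I_d => imul (gI N E p k A) (ipt (umon u (alpha p))))).

Definition ptbox (x : 'I_n -> R) : 'I_n -> ival R := fun l => ipt (x l).

Section Contract.
Variables (F : 'I_n -> ival R) (G : 'I_d -> 'I_n -> ival R)
          (xd : 'I_n -> R) (u : 'I_m -> R).
Let c (p : 'I_d) := umon u (alpha p).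
Definition Gsum (k : 'I_n) := isum predT (fun p => imul (G p k) (ipt (c p))).
Definition Gtail (k : 'I_n) (p : 'I_d) :=
  isum (fun l : 'I_d => (p < l)%N) (fun l => imul (G l k) (ipt (c l))).
Definition CFc (k : 'I_n) := icap (F k) (isub (ipt (xd k)) (Gsum k)).
Definition S0 (k : 'I_n) := icap (isub (ipt (xd k)) (CFc k)) (Gsum k).
Definition CGstep (k : 'I_n) (p : 'I_d) (S : ival R) :=
  if c p == 0 then G p k
  else idivr (icap (isub S (Gtail k p)) (imul (G p k) (ipt (c p)))) (c p).
(* Sseq k p = S_{p,k} (with 0-based indices for p) *)
Fixpoint Sseq (k : 'I_n) (p : nat) : ival R :=
  match p with
  | 0 => S0 k
  | p'.+1 => match (insub p' : option 'I_d) with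
             | Some i => icap (isub (Sseq k p') (imul (CGstep k i (Sseq k p')) (ipt (c i))))
                              (Gtail k i)
             | None => Sseq k p'
             end
  end.
Definition CGc (p : 'I_d) (k : 'I_n) := CGstep k p (Sseq k p).
End Contract.

(* data: xs i = x^i, xds i = xdot^i, us i = u^i for 1 <= i <= N *)
Variables (xs xds : nat -> 'I_n -> R) (us : nat -> 'I_m -> R).
Variable N : nat.

Definition refine (E : Estate) (i : nat) : Estate :=
  let F := fun k => fI N E k (ptbox (xs i)) in
  let G := fun p k => gI N E p k (ptbox (xs i)) in
  let e := Entry (xs i) (CFc F G (xds i) (us i)) (CGc F G (xds i) (us i)) in
  Estate_ (E0 E) (fun l => if l == i then Some e else Emap E l).

Definition sweep (i : nat) (E : Estate) : Estate :=
  foldl refine E (iota 1 i).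

Definition stabilizes (i : nat) (E E' : Estate) : Prop :=
  exists K : nat, E' = iter K (sweep i) E /\ sweep i E' = E'.

Variables (x0 : 'I_n -> R) (M : R).
Definition Einit : Estate :=
  Estate_ (Entry x0 (fun _ => Ival (- M) M) (fun _ _ => Ival (- M) M))
          (fun _ => None).

Inductive constructed : nat -> Estate -> Prop :=
| constructed0 : constructed 0 Einit
| constructedS i E E' : constructed i E ->
    stabilizes i.+1 (refine E i.+1) E' -> constructed i.+1 E'.

End Construction.

(* Main.v *)
Require Import Defs.
From HB Require Import structures.
From mathcomp Require Import all_boot all_order all_algebra.
From mathcomp Require Import all_classical all_reals all_analysis.
From mathcomp Require Import ring lra.
Import Order.TTheory GRing.Theory Num.Theory numFieldNormedType.Exports.
Local Open Scope ring_scope.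
Local Open Scope classical_set_scope.

Section IL.
Context {R : realType}.
Implicit Types (A B : ival R) (a b x : R).

Lemma imemP A x : imem A x = (ilo A <= x <= ihi A). Proof. by []. Qed.

Lemma imem_pt a : imem (ipt a) a. Proof. by rewrite /imem /= lexx. Qed.

Lemma imem_add A B a b : imem A a -> imem B b -> imem (iadd A B) (a + b).
Proof. rewrite /imem /= => /andP[h1 h2] /andP[h3 h4]; apply/andP; split; lra. Qed.

Lemma imem_neg A a : imem A a -> imem (ineg A) (- a).
Proof. rewrite /imem /= => /andP[h1 h2]; apply/andP; split; lra. Qed.

Lemma imem_sub A B a b : imem A a -> imem B b -> imem (isub A B) (a - b).
Proof. by move=> ha hb; apply: imem_add => //; apply: imem_neg. Qed.

Lemma imem_cap A B a : imem A a -> imem B a -> imem (icap A B) a.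
Proof.
rewrite /imem /= => /andP[h1 h2] /andP[h3 h4].
by rewrite ge_max le_min h1 h2 h3 h4.
Qed.

Lemma imem_mul A B a b : imem A a -> imem B b -> imem (imul A B) (a * b).
Proof.
case: A B => a1 a2 [b1 b2]; rewrite /imem /imul /= => /andP[h1 h2] /andP[h3 h4].
apply/andP; split.
- rewrite !ge_min.
  have [ha|ha] := lerP 0 a1; have [hb|hb] := lerP 0 b.
  + by rewrite (_ : a1 * b1 <= a * b) //; nra.
  + by rewrite (_ : a2 * b1 <= a * b) ?orbT //; nra.
  + by rewrite (_ : a1 * b2 <= a * b) ?orbT //; nra.
  + have [hc|hc] := lerP 0 a2.
    * by rewrite (_ : a2 * b1 <= a * b) ?orbT //; nra.
    * by rewrite (_ : a2 * b2 <= a * b) ?orbT //; nra.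
- rewrite !le_max.
  have [ha|ha] := lerP 0 a; have [hb|hb] := lerP 0 b.
  + by rewrite (_ : a * b <= a2 * b2) ?orbT //; nra.
  + have [hc|hc] := lerP 0 a1.
    * by rewrite (_ : a * b <= a1 * b2) ?orbT //; nra.
    * by rewrite (_ : a * b <= a1 * b1) ?orbT //; nra.
  + have [hc|hc] := lerP 0 b1.
    * by rewrite (_ : a * b <= a2 * b1) ?orbT //; nra.
    * by rewrite (_ : a * b <= a1 * b1) ?orbT //; nra.
  + by rewrite (_ : a * b <= a1 * b1) ?orbT //; nra.
Qed.

Lemma imem_sum (I : finType) (P : pred I) (F : I -> ival R) (v : I -> R) :
  (forall i, P i -> imem (F i) (v i)) -> imem (isum P F) (\sum_(i | P i) v i).
Proof.
move=> h; rewrite /isum.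
apply: (big_ind2 (fun A a => imem A a)) => //; first exact: imem_pt.
by move=> ? ? ? ? ; apply: imem_add.
Qed.

Lemma imem_conv A a b x : imem A a -> imem A b -> a <= x <= b -> imem A x.
Proof. rewrite /imem => /andP[h1 h2] /andP[h3 h4] /andP[h5 h6]; apply/andP; split; lra. Qed.

Lemma imem_abs A x : imem A x -> `|x| <= Num.max `|ilo A| `|ihi A|.
Proof.
rewrite /imem => /andP[h1 h2]; rewrite le_max.
have [hx|hx] := lerP 0 x.
- by rewrite (_ : `|x| <= `|ihi A|) ?orbT // !ger0_norm //; lra.
- by rewrite (_ : `|x| <= `|ilo A|) // !ltr0_norm //; lra.
Qed.

End IL.
Arguments imem_add {R A B a b}.
Arguments imem_neg {R A a}.
Arguments imem_sub {R A B a b}.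
Arguments imem_cap {R A B a}.
Arguments imem_mul {R A B a b}.
Arguments imem_conv {R A a b x}.
Arguments imem_abs {R A x}.


Set Implicit Arguments. Unset Strict Implicit.

Section Contr.
Context {R : realType} (n m d : nat) (alpha : 'I_d -> 'I_m -> nat).
Variables (F : 'I_n -> ival R) (G : 'I_d -> 'I_n -> ival R)
          (xd : 'I_n -> R) (u : 'I_m -> R) (k : 'I_n).
Variables (fv : R) (gv : 'I_d -> R).
Hypotheses (hF : imem (F k) fv) (hG : forall p, imem (G p k) (gv p))
  (hxd : xd k = fv + \sum_(p < d) gv p * umon u (alpha p)).

Let c p := umon u (alpha p).

Lemma Gsum_sound : imem (Gsum alpha G u k) (\sum_(p < d) gv p * c p).
Proof. by apply: imem_sum => p _; apply: imem_mul (hG p) (imem_pt _). Qed.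

Lemma Gtail_sound i : imem (Gtail alpha G u k i) (\sum_(l < d | (i < l)%N) gv l * c l).
Proof. by apply: imem_sum => p _; apply: imem_mul (hG p) (imem_pt _). Qed.

Lemma CFc_sound : imem (CFc alpha F G xd u k) fv.
Proof.
apply: imem_cap => //.
have -> : fv = xd k - \sum_(p < d) gv p * c p by rewrite hxd; ring.
by apply: imem_sub; [apply: imem_pt | apply: Gsum_sound].
Qed.

Lemma sum_split (i : 'I_d) :
  \sum_(l < d | (i <= l)%N) gv l * c l = gv i * c i + \sum_(l < d | (i < l)%N) gv l * c l.
Proof.
rewrite (bigD1 i) //=; congr (_ + _); apply: eq_bigl => l.
by rewrite ltn_neqAle andbC; congr (_ && _); rewrite eq_sym.
Qed.

Lemma CGstep_sound (i : 'I_d) S :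
  imem S (\sum_(l < d | (i <= l)%N) gv l * c l) -> imem (CGstep alpha G u k i S) (gv i).
Proof.
move=> hS; rewrite /CGstep; case: eqP => [_|/eqP hc]; first exact: hG.
rewrite /idivr -[gv i](mulfK hc); apply: imem_mul; last exact: imem_pt.
apply: imem_cap; last by apply: imem_mul (hG i) (imem_pt _).
have -> : gv i * c i = \sum_(l < d | (i <= l)%N) gv l * c l - \sum_(l < d | (i < l)%N) gv l * c l.
  by rewrite sum_split; ring.
by apply: imem_sub => //; apply: Gtail_sound.
Qed.

Lemma Sseq_sound j : imem (Sseq alpha F G xd u k j) (\sum_(l < d | (j <= l)%N) gv l * c l).
Proof.
elim: j => [|j IH] /=.
  apply: imem_cap.
    have -> : \sum_(l < d | (0 <= l)%N) gv l * c l = xd k - fv.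
      by rewrite hxd; rewrite addrC addKr. 
    by apply: imem_sub; [apply: imem_pt | apply: CFc_sound].
  by apply: Gsum_sound.
case: (ltnP j d) => hj.
  rewrite insubT /=.
  set i : 'I_d := Sub j hj.
  have ij : nat_of_ord i = j by [].
  rewrite -ij in IH *.
  apply: imem_cap; last exact: Gtail_sound.
  have -> : \sum_(l < d | (i < l)%N) gv l * c l
     = \sum_(l < d | (i <= l)%N) gv l * c l - gv i * c i by rewrite sum_split; ring.
  apply: imem_sub => //; apply: imem_mul; last exact: imem_pt.
  exact: CGstep_sound.
rewrite insubF ?ltnNge ?hj //.
rewrite (eq_bigl (fun l : 'I_d => (j <= l)%N)) // => l.
have hlj : (l < j)%N := leq_trans (ltn_ord l) hj.
have h1 : (j <= l)%N = false by rewrite leqNgt hlj.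
have h2 : (j < l)%N = false by rewrite ltnNge (ltnW hlj).
by rewrite h1 h2.
Qed.

Lemma CGc_sound p : imem (CGc alpha F G xd u p k) (gv p).
Proof. by apply: CGstep_sound; apply: Sseq_sound. Qed.

End Contr.

Unset Implicit Arguments. Set Strict Implicit.

Set Implicit Arguments. Unset Strict Implicit.

Section ESound.
Context {R : realType} (n m d : nat) (alpha : 'I_d -> 'I_m -> nat).
Variables (w : 'I_n -> R) (eta : ('I_n -> ival R) -> ival R).
Hypothesis heta : forall (B : 'I_n -> ival R) (y : 'I_n -> R),
            inbox B y -> imem (eta B) (wnorm w y).
Variables (X : 'I_n -> ival R)
  (f : ('I_n -> R) -> 'I_n -> R) (g : 'I_d -> ('I_n -> R) -> 'I_n -> R)
  (fbar : 'I_n -> R) (gbar : 'I_d -> 'I_n -> R).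
Hypotheses (hf : forall (k : 'I_n) (y z : 'I_n -> R), inbox X y -> inbox X z ->
          `|f y k - f z k| <= fbar k * wnorm w (fun l => y l - z l))
  (hg : forall (p : 'I_d) (k : 'I_n) (y z : 'I_n -> R), inbox X y -> inbox X z ->
          `|g p y k - g p z k| <= gbar p k * wnorm w (fun l => y l - z l)).
Variables (N : nat) (xs xds : nat -> 'I_n -> R) (us : nat -> 'I_m -> R).
Hypothesis hdata : forall i : nat, (1 <= i <= N)%N ->
     inbox X (xs i) /\
         forall k : 'I_n, xds i k =
           f (xs i) k + \sum_(p < d) g p (xs i) k * umon (us i) (alpha p).
Variables (M : R) (x0 : 'I_n -> R).
Hypotheses (hx0 : inbox X x0)
  (hfM : forall k, `|f x0 k| <= M) (hgM : forall p k, `|g p x0 k| <= M).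

Lemma eterm_sound (phi : ('I_n -> R) -> R) L xi C A y :
  inbox A y -> imem C (phi xi) ->
  `|phi y - phi xi| <= L * wnorm w (fun l => y l - xi l) ->
  imem (eterm eta xi C L A) (phi y).
Proof.
move=> hA hC hL.
set v := wnorm w (fun l => y l - xi l) in hL.
have hv : imem (eta (fun l => isub (A l) (ipt (xi l)))) v.
  by apply: heta => l; apply: imem_sub (hA l) (imem_pt _).
have -> : phi y = phi xi + (phi y - phi xi) by ring.
apply: imem_add => //.
have [hLv|hLv] := eqVneq (L * v) 0.
  have -> : phi y - phi xi = 0 * L * v.
    have : `|phi y - phi xi| <= 0 by rewrite -hLv.
    by rewrite normr_le0 => /eqP ->; ring.
  apply: imem_mul => //; apply: imem_mul; last exact: imem_pt.
  by rewrite /imem /=; apply/andP; split; lra.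
have hpos : 0 < L * v.
  by rewrite lt_def hLv /=; apply: le_trans hL.
set s := (phi y - phi xi) / (L * v).
have -> : phi y - phi xi = s * L * v by rewrite /s -mulrA divfK.
apply: imem_mul => //; apply: imem_mul; last exact: imem_pt.
have : `|s| <= 1.
  by rewrite /s normrM normfV (gtr0_norm hpos) ler_pdivrMr // mul1r.
by rewrite ler_norml /imem /=.
Qed.

Lemma Ecap_sound N' (E : Estate R n d) sel L A (v : R) :
  (forall e, (e = E0 E \/ exists i, Emap E i = Some e) ->
     imem (eterm eta (ept e) (sel e) L A) v) ->
  imem (Ecap eta N' E sel L A) v.
Proof.
move=> h; rewrite /Ecap; elim: (iota 1 N') => [|i s IH] /=; first by apply: h; left.
case hE: (Emap E i) => [e|] //; by apply: imem_cap => //; apply: h; right; exists i.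
Qed.

Definition sound_entry (e : entry R n d) :=
  [/\ inbox X (ept e), forall k, imem (eCF e k) (f (ept e) k)
    & forall p k, imem (eCG e p k) (g p (ept e) k)].
Definition soundE (E : Estate R n d) :=
  sound_entry (E0 E) /\ forall i e, Emap E i = Some e -> sound_entry e.

Lemma fI_sound E k A y : soundE E -> inbox X y -> inbox A y ->
  imem (fI fbar eta N E k A) (f y k).
Proof.
move=> [h0 hm] hy hA; apply: Ecap_sound => e he.
have [hx hF _] : sound_entry e by case: he => [->|[i /hm]].
by apply: (eterm_sound (phi := fun z => f z k)) => //; apply: hf.
Qed.

Lemma gI_sound E p k A y : soundE E -> inbox X y -> inbox A y ->
  imem (gI gbar eta N E p k A) (g p y k).
Proof.
move=> [h0 hm] hy hA; apply: Ecap_sound => e he.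
have [hx _ hG] : sound_entry e by case: he => [->|[i /hm]].
by apply: (eterm_sound (phi := fun z => g p z k)) => //; apply: hg.
Qed.

Lemma hI_sound E A y u k : soundE E -> inbox X y -> inbox A y ->
  imem (hI alpha fbar gbar eta N E A u k)
       (f y k + \sum_(p < d) g p y k * umon u (alpha p)).
Proof.
move=> hE hy hA; apply: imem_add; first exact: fI_sound.
by apply: imem_sum => p _; apply: imem_mul; [apply: gI_sound | apply: imem_pt].
Qed.

Lemma refine_sound E i : soundE E -> (1 <= i <= N)%N ->
  soundE (refine alpha fbar gbar eta xs xds us N E i).
Proof.
move=> hE hi; have [hx hxd] := hdata hi.
have hpt : inbox (ptbox (xs i)) (xs i) by move=> l; apply: imem_pt.
split; first by case: hE.
move=> l e /=; case: eqP => [_ [<-]|_]; last by apply: hE.2.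
split => //=.
  move=> k; apply: (CFc_sound (gv := fun p => g p (xs i) k)).
  - exact: fI_sound.
  - by move=> p; apply: gI_sound.
  - exact: hxd.
move=> p k; apply: (CGc_sound (fv := f (xs i) k) (gv := fun p => g p (xs i) k)).
  - exact: fI_sound.
  - by move=> q; apply: gI_sound.
  - exact: hxd.
Qed.

Lemma sweep_sound i E : (i <= N)%N -> soundE E ->
  soundE (sweep alpha fbar gbar eta xs xds us N i E).
Proof.
move=> hi; rewrite /sweep.
have : all (fun l => (1 <= l <= N)%N) (iota 1 i).
  apply/allP => l; rewrite mem_iota => /andP[h1 h2]; rewrite h1 /=.
  by rewrite -ltnS; apply: leq_trans h2 _; rewrite add1n ltnS.
elim: (iota 1 i) E => [|a s IH] E //= /andP[ha hs] hE.
by apply: IH => //; apply: refine_sound.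
Qed.

Lemma constructed_sound j E :
  constructed alpha fbar gbar eta xs xds us N x0 M j E -> (j <= N)%N -> soundE E.
Proof.
elim => [|i E1 E' hc IH [K [-> _]]] hj.
  split => //=; split => //=.
    by move=> k; rewrite /imem /= -ler_norml.
  by move=> p k; rewrite /imem /= -ler_norml.
have hE1 : soundE E1 by apply: IH; apply: ltnW.
elim: K => [|K IHK] /=.
  by apply: refine_sound => //; rewrite hj.
exact: sweep_sound.
Qed.

End ESound.

Unset Implicit Arguments. Set Strict Implicit.

Set Implicit Arguments. Unset Strict Implicit.

Section Gen.
Context {R : realType}.

Lemma itv_cc_set (a b : R) : `[a, b] = [set t | a <= t <= b] :> set R.
Proof. by apply/seteqP; split => t /=; rewrite in_itv. Qed.

Lemma psi_cont (y : R -> R) (a b K H0 : R) :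
  {within [set t | a <= t <= b], continuous y} ->
  {within `[a, b], continuous (fun s => (K / 2 * ((s - a) * (s - a)) + s * H0) - y s)}.
Proof.
move=> hc; rewrite itv_cc_set.
have hp : continuous (fun s : R => K / 2 * ((s - a) * (s - a)) + s * H0).
  move=> z; apply: (@continuousD _ _ _ (fun s : R => K / 2 * ((s - a) * (s - a))) (fun s => s * H0)).
    apply: (@continuousM _ _ (fun=> K/2) (fun s : R => (s - a) * (s - a))); first exact: cvg_cst.
    apply: (@continuousM _ _ (fun s : R => (s - a)) (fun s : R => (s - a))).
      apply: (@continuousB _ _ _ id (fun=> a)); [exact: cvg_id|exact: cvg_cst].
      apply: (@continuousB _ _ _ id (fun=> a)); [exact: cvg_id|exact: cvg_cst].
  apply: (@continuousM _ _ id (fun=> H0)); [exact: cvg_id|exact: cvg_cst].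
have hp' : {within [set t | a <= t <= b], continuous (fun s : R => K / 2 * ((s - a) * (s - a)) + s * H0)} := continuous_subspaceT hp.
move=> x.
exact: (@continuousB _ _ _ (fun s : subspace [set t | a <= t <= b] => K / 2 * ((s - a) * (s - a)) + s * H0) y x (hp' x) (hc x)).
Qed.

Lemma psi_der (y : R -> R) (dy a K H0 s : R) :
  is_derive s (1:R) y dy ->
  is_derive s (1:R) (fun s => (K / 2 * ((s - a) * (s - a)) + s * H0) - y s)
     ((K * (s - a) + H0) - dy).
Proof.
move=> h1.
have hsa := is_deriveB (is_derive_id s (1:R)) (is_derive_cst a s (1:R)).
have hm := is_deriveM hsa hsa.
have hz := is_deriveZ (K/2) hm.
have hl := is_deriveM (is_derive_id s (1:R)) (is_derive_cst H0 s (1:R)).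
have hd := is_deriveD hz hl.
have hb := is_deriveB hd h1.
eapply is_derive_eq. exact hb.
have e : forall u v : R, u *: v = u * v by [].
change ((id - cst a) s) with (s - a).
by rewrite !e /cst; field.
Qed.

Lemma second_gen (y dy : R -> R) (a b K H0 : R) : a <= b ->
  (forall s, a < s < b -> is_derive s (1:R) y (dy s)) ->
  {within [set t | a <= t <= b], continuous y} ->
  (forall s, a <= s <= b -> dy s - H0 <= K * (s - a)) ->
  y b - y a - (b - a) * H0 <= K * (b - a) ^+ 2 / 2.
Proof.
move=> hab hd hc hK.
have hd' : forall s, s \in `]a, b[%R -> is_derive s (1:R)
   (fun s => (K / 2 * ((s - a) * (s - a)) + s * H0) - y s) ((K * (s - a) + H0) - dy s).
  by move=> s; rewrite in_itv /= => hs; apply: psi_der; apply: hd.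
have [c hc1 hc2] := MVT_segment hab hd' (psi_cont (K:=K) (H0:=H0) hc).
move: hc1; rewrite in_itv /= => hc1.
have := hK c hc1 => h.
have : 0 <= ((K * (c - a) + H0) - dy c) * (b - a) by apply: mulr_ge0; lra.
rewrite -hc2 => h2.
have e : (K * (b - a) ^+ 2 / 2) = K / 2 * ((b - a) * (b - a)) by rewrite expr2; field.
rewrite e; lra.
Qed.

End Gen.

Unset Implicit Arguments. Set Strict Implicit.

Set Implicit Arguments. Unset Strict Implicit.

Section Gen2.
Context {R : realType}.

Definition dst (a b y : R) := Num.max 0 (Num.max (y - b) (a - y)).
Definition clp (a b y : R) := Num.min (Num.max y a) b.

Lemma dst_ge0 a b y : 0 <= dst a b y.
Proof. by rewrite /dst le_max lexx. Qed.

Lemma dst_le a b y z : a <= z <= b -> dst a b y <= `|y - z|.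
Proof.
move=> /andP[h1 h2]; rewrite /dst !ge_max normr_ge0 /=.
have := ler_norm (y - z); have := ler_norm (z - y); rewrite distrC => u v.
by apply/andP; split; lra.
Qed.

Lemma dst_le0 a b y : dst a b y <= 0 -> a <= y <= b.
Proof. by rewrite /dst !ge_max => /and3P[_ h1 h2]; apply/andP; split; lra. Qed.

Lemma clp_mem a b y : a <= b -> a <= clp a b y <= b.
Proof.
move=> hab; rewrite /clp.
case: (leP y a) => h1; case: (leP a b) => h2 //; try lra;
case: (leP y b) => h3; try (apply/andP; split; lra).
Qed.

Lemma clp_dist a b y : a <= b -> `|y - clp a b y| <= dst a b y.
Proof.
move=> hab; rewrite /clp /dst.
case: (leP y a) => h1.
  rewrite (min_l hab) (@max_r _ _ (y - b)); last lra.
  by rewrite max_r ?ler0_norm; lra.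
case: (leP y b) => h3.
  by rewrite subrr normr0 le_max lexx.
rewrite (@max_l _ _ (y - b)); last lra.
by rewrite max_r ?ger0_norm; lra.
Qed.

Lemma clp_between a b y p : a <= p <= b ->
  (y <= clp a b y <= p) \/ (p <= clp a b y <= y).
Proof.
move=> /andP[h1 h2]; rewrite /clp.
case: (leP y a) => h3.
  have -> : Num.min a b = a by apply: min_l; lra.
  by left; apply/andP; split; lra.
case: (leP y b) => h4.
  by case: (leP y p) => h5; [left|right]; rewrite lexx /= ?andbT; lra.
by right; apply/andP; split; lra.
Qed.

Lemma wnorm_le n (w : 'I_n -> R) (v : 'I_n -> R) : (forall l, 0 <= w l) ->
  wnorm w v <= \sum_l w l * `|v l|.
Proof.
move=> hw; rewrite /wnorm.
have [h1 h2] : \sum_i (w i * v i) ^+ 2 <= (\sum_i w i * `|v i|) ^+ 2 /\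
               0 <= \sum_i w i * `|v i|.
  apply: (big_rec2 (fun y1 y2 => y1 <= y2 ^+ 2 /\ 0 <= y2)).
    by rewrite expr0n /=.
  move=> i y1 y2 _ [h1 h2].
  have hwi := hw i; have hv := normr_ge0 (v i).
  have e : (w i * v i) ^+ 2 = (w i * `|v i|) ^+ 2.
    by rewrite !exprMn real_normK ?num_real.
  rewrite e; split; last by apply: addr_ge0 => //; apply: mulr_ge0.
  have : 0 <= w i * `|v i| by apply: mulr_ge0.
  nra.
rewrite -(ger0_norm h2) -sqrtr_sqr ler_sqrt //.
exact: sqr_ge0.
Qed.

Lemma geom_small (r D : R) : 0 <= D -> (forall j : nat, r <= D / 2 ^+ j) -> r <= 0.
Proof.
move=> hD h; rewrite leNgt; apply/negP => hr.
have hb := archi_boundP (divr_ge0 hD (ltW hr)).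
set j := Num.bound _ in hb.
have hj : (j < 2 ^ j)%N by apply: ltn_expl.
have h2 : (j%:R : R) <= 2 ^+ j.
  by rewrite -natrX ler_nat ltnW.
have := h j; rewrite ler_pdivlMr ?exprn_gt0 // => h3.
have : D / r < 2 ^+ j by apply: lt_le_trans h2.
rewrite ltr_pdivrMr // => h4.
nra.
Qed.

End Gen2.

Unset Implicit Arguments. Set Strict Implicit.

Set Implicit Arguments. Unset Strict Implicit.

Section Traj.
Context {R : realType} (n : nat) (w : 'I_n -> R) (X : 'I_n -> ival R).
Hypothesis hw : forall l, 0 < w l.
Variables (H : ('I_n -> R) -> 'I_n -> R) (Lam : 'I_n -> R).
Hypothesis hLam : forall k, 0 <= Lam k.
Hypothesis hLip : forall k y z, inbox X y -> inbox X z ->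
  `|H y k - H z k| <= Lam k * wnorm w (fun l => y l - z l).
Variables (Rq Pq HP : 'I_n -> ival R).
Hypothesis hPq : boxwf Pq.
Hypothesis hHP : forall k y, inbox X y -> inbox Pq y -> imem (HP k) (H y k).
Variables (dt tq : R).
Hypothesis hdt : 0 < dt.
Hypothesis hP : forall k, iincl (iadd (Rq k) (imul (Ival 0 dt) (HP k))) (Pq k).
Variable x : R -> 'I_n -> R.
Hypotheses (hxq : inbox Rq (x tq))
  (hxX : forall t, tq <= t <= tq + dt -> inbox X (x t))
  (hxc : forall k : 'I_n, {within [set t | tq <= t <= tq + dt], continuous (fun s => x s k)})
  (hxd : forall (k : 'I_n) (t : R), tq < t < tq + dt ->
     is_derive t (1 : R) (fun s => x s k) (H (x t) k)).

Lemma iincl_mem (A B : ival R) v : iincl A B -> imem A v -> imem B v.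
Proof. by rewrite /iincl /imem => /andP[h1 h2] /andP[h3 h4]; apply/andP; split; lra. Qed.

Lemma hLip_sum k y z : inbox X y -> inbox X z ->
  `|H y k - H z k| <= Lam k * \sum_l w l * `|y l - z l|.
Proof.
move=> hy hz; apply: le_trans (hLip k hy hz) _; apply: ler_wpM2l => //.
by apply: wnorm_le => l; apply: ltW.
Qed.

Lemma P0 k r : imem (Rq k) r -> imem (Pq k) r.
Proof.
move=> hr; rewrite -[r]addr0; apply: iincl_mem (hP k) _; apply: imem_add => //.
rewrite /imem /imul /= !mul0r; apply/andP; split.
  by rewrite !ge_min lexx.
by rewrite !le_max lexx.
Qed.

Lemma P_step k r s1 s2 v1 v2 : imem (Rq k) r -> 0 <= s1 -> 0 <= s2 -> s1 + s2 <= dt ->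
  imem (HP k) v1 -> imem (HP k) v2 -> imem (Pq k) (r + s1 * v1 + s2 * v2).
Proof.
move=> hr hs1 hs2 hs hv1 hv2.
have hlo : imem (HP k) (ilo (HP k)).
  by move: hv1; rewrite /imem => /andP[h1 h2]; rewrite lexx /=; lra.
have hhi : imem (HP k) (ihi (HP k)).
  by move: hv1; rewrite /imem => /andP[h1 h2]; rewrite lexx /=; lra.
have hs' : imem (Ival 0 dt) (s1 + s2) by rewrite /imem /=; apply/andP; split; lra.
have h1 := iincl_mem (hP k) (imem_add hr (imem_mul hs' hlo)).
have h2 := iincl_mem (hP k) (imem_add hr (imem_mul hs' hhi)).
apply: imem_conv h1 h2 _.
move: hv1 hv2; rewrite /imem => /andP[a1 a2] /andP[a3 a4].
apply/andP; split; nra.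
Qed.

Lemma mvt k a b : tq <= a -> a <= b -> b <= tq + dt ->
  exists c, a <= c <= b /\ x b k - x a k = H (x c) k * (b - a).
Proof.
move=> h1 h2 h3.
have hd : forall s, s \in `]a, b[%R -> is_derive s (1:R) (fun s => x s k) (H (x s) k).
  by move=> s; rewrite in_itv /= => /andP[u v]; apply: hxd; apply/andP; split; lra.
have hc : {within `[a, b], continuous (fun s => x s k)}.
  have hsub : [set t | a <= t <= b] `<=` [set t | tq <= t <= tq + dt].
    by move=> t /= /andP[u v]; apply/andP; split; lra.
  rewrite itv_cc_set; exact: (continuous_subspaceW hsub (@hxc k)).
have [c hc1 hc2] := MVT_segment h2 hd hc.
by exists c; split => //; move: hc1; rewrite in_itv.
Qed.


Definition rho (y : 'I_n -> R) := \sum_l w l * dst (ilo (Pq l)) (ihi (Pq l)) (y l).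
Definition clampv (y : 'I_n -> R) := fun l => clp (ilo (Pq l)) (ihi (Pq l)) (y l).
Definition Dbound := \sum_l w l * (`|ilo (X l)| + `|ihi (X l)| + `|ilo (Pq l)| + `|ihi (Pq l)|).

Lemma rho_ge0 y : 0 <= rho y.
Proof. by apply: sumr_ge0 => l _; apply: mulr_ge0; [apply: ltW | apply: dst_ge0]. Qed.

Lemma rho_le0 y : rho y <= 0 -> inbox Pq y.
Proof.
move=> h l.
have : w l * dst (ilo (Pq l)) (ihi (Pq l)) (y l) <= 0.
  apply: le_trans h; rewrite /rho (bigD1 l) //= lerDl.
  by apply: sumr_ge0 => i _; apply: mulr_ge0; [apply: ltW | apply: dst_ge0].
by rewrite pmulr_rle0 // => /dst_le0.
Qed.

Lemma clamp_P y : inbox Pq (clampv y).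
Proof. by move=> l; apply: clp_mem; apply: hPq. Qed.

Lemma clamp_X y p : inbox X y -> inbox X p -> inbox Pq p -> inbox X (clampv y).
Proof.
move=> hy hp hpp l; have [h|h] := clp_between (y l) (hpp l).
  exact: imem_conv (hy l) (hp l) h.
exact: imem_conv (hp l) (hy l) h.
Qed.

Lemma clamp_dist y : \sum_l w l * `|y l - clampv y l| <= rho y.
Proof.
apply: ler_sum => l _; apply: ler_wpM2l; first exact: ltW.
by apply: clp_dist; apply: hPq.
Qed.

Lemma Hclamp k y p : inbox X y -> inbox X p -> inbox Pq p ->
  exists2 v, imem (HP k) v & `|H y k - v| <= Lam k * rho y.
Proof.
move=> hy hp hpp; exists (H (clampv y) k).
  by apply: hHP; [apply: clamp_X hy hp hpp | apply: clamp_P].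
apply: le_trans (hLip_sum k hy (clamp_X hy hp hpp)) _.
by apply: ler_wpM2l => //; apply: clamp_dist.
Qed.

Lemma Dbound_ge0 : 0 <= Dbound.
Proof.
apply: sumr_ge0 => l _; apply: mulr_ge0; first exact: ltW.
by rewrite !addr_ge0.
Qed.

Lemma rho_le_D y : inbox X y -> rho y <= Dbound.
Proof.
move=> hy; apply: ler_sum => l _; apply: ler_wpM2l; first exact: ltW.
move: (hy l); rewrite /imem /dst => /andP[h1 h2].
have := ler_norm (ilo (X l)); have := ler_norm (- ilo (X l)); rewrite normrN.
have := ler_norm (ihi (X l)); have := ler_norm (- ihi (X l)); rewrite normrN.
have := ler_norm (ilo (Pq l)); have := ler_norm (- ilo (Pq l)); rewrite normrN.
have := ler_norm (ihi (Pq l)); have := ler_norm (- ihi (Pq l)); rewrite normrN.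
move=> *; rewrite !ge_max; apply/and3P; split; lra.
Qed.

Lemma via_t0 t0 : tq <= t0 -> t0 <= tq + dt ->
  (forall s, tq <= s <= t0 -> inbox Pq (x s)) ->
  forall k, exists2 v0, imem (HP k) v0 & x t0 k = x tq k + (t0 - tq) * v0.
Proof.
move=> h1 h2 hin k.
have [c [hc e]] := mvt k (lexx tq) h1 h2.
exists (H (x c) k).
  apply: hHP; last exact: hin.
  by apply: hxX; move: hc => /andP[u v]; apply/andP; split; lra.
have -> : x t0 k = x tq k + (x t0 k - x tq k) by ring.
by rewrite e; ring.
Qed.

Lemma Lam_le k : Lam k <= \sum_i Lam i.
Proof.
rewrite (bigD1 k) //= lerDl; by apply: sumr_ge0 => i _.
Qed.

Lemma Step t0 t1 B : tq <= t0 -> t0 <= t1 -> t1 <= tq + dt ->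
  (forall s, tq <= s <= t0 -> inbox Pq (x s)) ->
  (forall s, t0 <= s <= t1 -> rho (x s) <= B) ->
  forall s, t0 <= s <= t1 ->
  rho (x s) <= (\sum_l w l) * ((t1 - t0) * ((\sum_i Lam i) * B)).
Proof.
move=> h0 h01 h1 hin hB s /andP[hs0 hs1].
have hB0 : 0 <= B.
  by apply: le_trans (rho_ge0 _) (hB t0 _); rewrite lexx h01.
rewrite /rho mulr_suml; apply: ler_sum => k _; apply: ler_wpM2l; first exact: ltW.
have [v0 hv0 e0] := via_t0 h0 (le_trans h01 h1) hin k.
have hs1' : s <= tq + dt by lra.
have [c [hc e1]] := mvt k h0 hs0 hs1'.
have hcX : inbox X (x c).
  by apply: hxX; move: hc => /andP[u v]; apply/andP; split; lra.
have ht0X : inbox X (x t0) by apply: hxX; apply/andP; split; lra.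
have ht0P : inbox Pq (x t0) by apply: hin; apply/andP; split; lra.
have [v1 hv1 hev] := Hclamp k hcX ht0X ht0P.
have hz := @P_step k (x tq k) (t0 - tq) (s - t0) v0 v1 (hxq k) ltac:(lra) ltac:(lra) ltac:(lra) hv0 hv1.
apply: le_trans (dst_le _ hz) _.
have -> : x s k - (x tq k + (t0 - tq) * v0 + (s - t0) * v1) = (s - t0) * (H (x c) k - v1).
  have -> : x s k = x t0 k + (x s k - x t0 k) by ring.
  by rewrite e1 e0; ring.
rewrite normrM (@ger0_norm _ (s - t0)); last lra.
apply: ler_pM; first lra; first exact: normr_ge0; first lra.
apply: le_trans hev _.
have hrc : rho (x c) <= B by apply: hB; move: hc => /andP[u v]; apply/andP; split; lra.
apply: le_trans (ler_wpM2l (hLam k) hrc) _.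
by apply: ler_wpM2r => //; apply: Lam_le.
Qed.


Definition Cw := \sum_l w l.
Definition CL := \sum_i Lam i.
Definition delta := (2 * Cw * CL + 1)^-1.

Lemma Cw_ge0 : 0 <= Cw. Proof. by apply: sumr_ge0 => l _; apply: ltW. Qed.
Lemma CL_ge0 : 0 <= CL. Proof. by apply: sumr_ge0 => l _. Qed.

Lemma delta_gt0 : 0 < delta.
Proof.
rewrite /delta invr_gt0; have := Cw_ge0; have := CL_ge0 => a b.
have : 0 <= 2 * Cw * CL by rewrite mulr_ge0 // mulr_ge0.
lra.
Qed.

Lemma delta_half : Cw * CL * delta <= 1 / 2.
Proof.
have := Cw_ge0; have := CL_ge0 => a b.
have hp : 0 < 2 * Cw * CL + 1.
  have : 0 <= 2 * Cw * CL by rewrite mulr_ge0 // mulr_ge0.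
  lra.
rewrite /delta -/(_ / _) ler_pdivrMr //.
have -> : 1 / 2 * (2 * Cw * CL + 1) = Cw * CL + 1 / 2 by field.
lra.
Qed.

Lemma Stepn t0 t1 : tq <= t0 -> t0 <= t1 -> t1 <= tq + dt -> t1 - t0 <= delta ->
  (forall s, tq <= s <= t0 -> inbox Pq (x s)) ->
  forall (j : nat) s, t0 <= s <= t1 -> rho (x s) <= Dbound / 2 ^+ j.
Proof.
move=> h0 h01 h1 hd hin j; elim: j => [|j IH] s hs.
  rewrite expr0 divr1; apply: rho_le_D; apply: hxX.
  by move: hs => /andP[u v]; apply/andP; split; lra.
apply: le_trans (Step h0 h01 h1 hin IH hs) _.
set B := Dbound / 2 ^+ j.
have hB : 0 <= B by rewrite /B divr_ge0 ?exprn_ge0 ?Dbound_ge0.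
have hCLB : 0 <= CL * B by rewrite mulr_ge0 ?CL_ge0.
have e1 : (t1 - t0) * (CL * B) <= delta * (CL * B) by apply: ler_wpM2r.
apply: le_trans (ler_wpM2l Cw_ge0 e1) _.
have -> : Cw * (delta * (CL * B)) = (Cw * CL * delta) * B by ring.
apply: le_trans (ler_wpM2r hB delta_half) _.
rewrite /B exprS invfM le_eqVlt; apply/orP; left; apply/eqP; field; by rewrite expf_neq0.
Qed.

Lemma grid (i : nat) : forall s, tq <= s <= Num.min (tq + i%:R * delta) (tq + dt) ->
  inbox Pq (x s).
Proof.
have hdl := delta_gt0.
elim: i => [|i IH] s.
  rewrite mul0r addr0 le_min => /andP[h1 /andP[h2 _]].
  have -> : s = tq by apply/eqP; rewrite eq_le h1 h2.
  by move=> l; apply: P0; apply: hxq.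
have hi : 0 <= (i%:R : R) by apply: ler0n.
have e : i.+1%:R * delta = i%:R * delta + delta by rewrite -addn1 natrD mulrDl mul1r.
have hid : 0 <= i%:R * delta by rewrite mulr_ge0 // ltW.
have [h0 h01 h1 hdd] : [/\ tq <= Num.min (tq + i%:R * delta) (tq + dt),
    Num.min (tq + i%:R * delta) (tq + dt) <= Num.min (tq + i.+1%:R * delta) (tq + dt),
    Num.min (tq + i.+1%:R * delta) (tq + dt) <= tq + dt &
    Num.min (tq + i.+1%:R * delta) (tq + dt) - Num.min (tq + i%:R * delta) (tq + dt) <= delta].
  rewrite e; set A := tq + i%:R * delta; set Bq := tq + dt.
  have m1 : Num.min (A + delta) Bq <= A + delta by rewrite ge_min lexx.
  have m2 : Num.min (A + delta) Bq <= Bq by rewrite ge_min lexx orbT.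
  have m3 : Num.min A Bq <= A by rewrite ge_min lexx.
  have m4 : Num.min A Bq <= Bq by rewrite ge_min lexx orbT.
  have eA : tq + (i%:R * delta + delta) = A + delta by rewrite /A addrA.
  rewrite eA; split => //.
  - by rewrite le_min /A /Bq !lerDl hid ltW.
  - rewrite le_min; apply/andP; split; first lra.
    by apply: le_trans m4 _; rewrite lexx.
  - have [h|h] := lerP A Bq.
      have : A <= Num.min A Bq by rewrite le_min lexx h.
      lra.
    have : Bq <= Num.min A Bq by rewrite le_min lexx (ltW h).
    lra.
set t0 := Num.min (tq + i%:R * delta) (tq + dt) in h0 h01 hdd IH *.
set t1 := Num.min (tq + i.+1%:R * delta) (tq + dt) in h01 h1 hdd *.
move=> /andP[hs1 hs2].
case: (leP s t0) => hst.
  by apply: IH; rewrite hs1 hst.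
apply: rho_le0; apply: (@geom_small _ _ Dbound Dbound_ge0) => j.
apply: (Stepn h0 h01 h1 hdd IH).
by rewrite (ltW hst) hs2.
Qed.

Lemma enclosure s : tq <= s <= tq + dt -> inbox Pq (x s).
Proof.
move=> hs; have hdl := delta_gt0.
have hb := archi_boundP (divr_ge0 (ltW hdt) (ltW hdl)).
set i := Num.bound _ in hb.
apply: (grid (i := i)).
move: hb; rewrite ltr_pdivrMr // => hb.
have -> : Num.min (tq + i%:R * delta) (tq + dt) = tq + dt by apply: min_r; lra.
exact: hs.
Qed.


Definition mm (l : 'I_n) := Num.max `|ilo (HP l)| `|ihi (HP l)|.

Lemma bound1 k c : tq <= c <= tq + dt ->
  `|H (x c) k - H (x tq) k| <= Lam k * (\sum_l w l * mm l) * (c - tq).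
Proof.
move=> /andP[hc1 hc2].
have hcX : inbox X (x c) by apply: hxX; rewrite hc1 hc2.
have hqX : inbox X (x tq) by apply: hxX; rewrite lexx /=; lra.
apply: le_trans (hLip_sum k hcX hqX) _.
rewrite -mulrA mulr_suml; apply: ler_wpM2l => //.
apply: ler_sum => l _; rewrite -mulrA; apply: ler_wpM2l; first exact: ltW.
have [c' [hc' e]] := mvt l (lexx tq) hc1 hc2.
rewrite e normrM (@ger0_norm _ (c - tq)); last lra.
apply: ler_wpM2r; first lra.
apply: imem_abs; apply: hHP; last apply: enclosure.
  by apply: hxX; move: hc' => /andP[u v]; apply/andP; split; lra.
by move: hc' => /andP[u v]; apply/andP; split; lra.
Qed.

Lemma second k :
  `|x (tq + dt) k - x tq k - dt * H (x tq) k| <=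
     Lam k * (\sum_l w l * mm l) * dt ^+ 2 / 2.
Proof.
have hab : tq <= tq + dt by move: hdt; lra.
have e : tq + dt - tq = dt by ring.
have hb : forall s, tq <= s <= tq + dt ->
    `|H (x s) k - H (x tq) k| <= Lam k * (\sum_l w l * mm l) * (s - tq).
  by move=> s hs; apply: bound1.
set K := Lam k * (\sum_l w l * mm l) in hb *; clearbody K.
have h1 := @second_gen _ (fun s => x s k) (fun s => H (x s) k) tq (tq + dt) K (H (x tq) k) hab
  (fun s hs => @hxd k s hs) (@hxc k).
have h2 := @second_gen _ (fun s => - x s k) (fun s => - H (x s) k) tq (tq + dt) K (- H (x tq) k) hab.
rewrite e in h1 h2.
rewrite ler_norml; apply/andP; split.
  have h2' : - x (tq + dt) k - - x tq k - dt * - H (x tq) k <= K * dt ^+ 2 / 2.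
    apply: h2.
    - by move=> s hs; exact (is_deriveN (@hxd k s hs)).
    - by move=> z; apply: continuousN; apply: hxc.
    - move=> s hs; have := hb s hs; rewrite ler_norml => /andP[u _]; lra.
  lra.
apply: h1 => s hs; have := hb s hs; rewrite ler_norml => /andP[_ u]; lra.
Qed.

End Traj.

Unset Implicit Arguments. Set Strict Implicit.

Definition sg {R : realType} (a : R) : R := if 0 <= a then 1 else -1.

Lemma sgK {R : realType} (a : R) : sg a * a = `|a|.
Proof.
rewrite /sg; case: (lerP 0 a) => h; first by rewrite mul1r ger0_norm.
by rewrite ltr0_norm // mulN1r.
Qed.

Lemma sg_mem {R : realType} (a t : R) : -1 <= t <= 1 -> imem (Ival (-1) 1) (t * sg a).
Proof.
move=> /andP[h1 h2]; rewrite /imem /sg /=.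
by case: (lerP 0 a) => _; rewrite ?mulr1 ?mulrN1; apply/andP; split; lra.
Qed.

Theorem theorem2
  (R : realType) (n m d : nat) (alpha : 'I_d -> 'I_m -> nat)
  (* weights of ||.||_w and the fixed interval extension eta^w *)
  (w : 'I_n -> R) (hw : forall l, 0 < w l)
  (eta : ('I_n -> ival R) -> ival R)
  (heta : forall (B : 'I_n -> ival R) (y : 'I_n -> R),
            inbox B y -> imem (eta B) (wnorm w y))
  (* state box X and control box U *)
  (X : 'I_n -> ival R) (U : 'I_m -> ival R) (hX : boxwf X) (hU : boxwf U)
  (* unknown dynamics, Lipschitz on X w.r.t. ||.||_w with known bounds *)
  (f : ('I_n -> R) -> 'I_n -> R) (g : 'I_d -> ('I_n -> R) -> 'I_n -> R)
  (fbar : 'I_n -> R) (gbar : 'I_d -> 'I_n -> R)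
  (hf : forall (k : 'I_n) (y z : 'I_n -> R), inbox X y -> inbox X z ->
          `|f y k - f z k| <= fbar k * wnorm w (fun l => y l - z l))
  (hg : forall (p : 'I_d) (k : 'I_n) (y z : 'I_n -> R), inbox X y -> inbox X z ->
          `|g p y k - g p z k| <= gbar p k * wnorm w (fun l => y l - z l))
  (* data T_j = {(x^i, xdot^i, u^i) : 1 <= i <= N}, with N = j - 1 *)
  (N : nat) (xs xds : nat -> 'I_n -> R) (us : nat -> 'I_m -> R)
  (hdata : forall i : nat, (1 <= i <= N)%N ->
     [/\ inbox X (xs i), inbox U (us i) &
         forall k : 'I_n, xds i k =
           f (xs i) k + \sum_(p < d) g p (xs i) k * umon (us i) (alpha p)])
  (* M and x^0 *)
  (M : R) (hM : 0 < M) (x0 : 'I_n -> R) (hx0 : inbox X x0)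
  (hfM : forall k, `|f x0 k| <= M) (hgM : forall p k, `|g p x0 k| <= M)
  (* E_j obtained by the construction *)
  (E : Estate R n d)
  (hE : constructed alpha fbar gbar eta xs xds us N x0 M N E)
  (* one integration step *)
  (dt : R) (hdt : 0 < dt) (uq : 'I_m -> R) (huq : inbox U uq) (tq : R)
  (Rq Pq : 'I_n -> ival R) (hRq : boxwf Rq) (hPq : boxwf Pq)
  (hP : forall k : 'I_n,
     iincl (iadd (Rq k) (imul (Ival 0 dt) (hI alpha fbar gbar eta N E Pq uq k))) (Pq k))
  (* a trajectory on [tq, tq + dt], starting in Rq, evolving in X *)
  (x : R -> 'I_n -> R)
  (hxq : inbox Rq (x tq))
  (hxX : forall t, tq <= t <= tq + dt -> inbox X (x t))
  (hxc : forall k : 'I_n, {within [set t | tq <= t <= tq + dt], continuous (fun s => x s k)})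
  (hxd : forall (k : 'I_n) (t : R), tq < t < tq + dt ->
     is_derive t (1 : R) (fun s => x s k)
       (f (x t) k + \sum_(p < d) g p (x t) k * umon uq (alpha p))) :
  let hIE := hI alpha fbar gbar eta N E in
  let Jf := fun (k l : 'I_n) => imul (imul (Ival (-1) 1) (ipt (w l))) (ipt (fbar k)) in
  let Jg := fun (p : 'I_d) (k l : 'I_n) =>
              imul (imul (Ival (-1) 1) (ipt (w l))) (ipt (gbar p k)) in
  let J := fun (k l : 'I_n) =>
     iadd (Jf k l) (isum predT (fun p : 'I_d => imul (Jg p k l) (ipt (umon uq (alpha p))))) in
  let Rnext := fun k : 'I_n =>
     iadd (iadd (Rq k) (imul (hIE Rq uq k) (ipt dt)))
          (imul (isum predT (fun l : 'I_n => imul (J k l) (hIE Pq uq l)))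
                (ipt (dt ^+ 2 / 2))) in
  inbox Rnext (x (tq + dt)).
Proof.
move=> hIE Jf Jg J Rnext.
pose c p := umon uq (alpha p).
pose Hf (y : 'I_n -> R) k := f y k + \sum_(p < d) g p y k * c p.
pose Lam k := `|fbar k| + \sum_(p < d) `|gbar p k| * `|c p|.
have hLam : forall k, 0 <= Lam k.
  by move=> k; apply: addr_ge0 => //; apply: sumr_ge0 => p _; apply: mulr_ge0.
have hdata' : forall i : nat, (1 <= i <= N)%N ->
     inbox X (xs i) /\ forall k : 'I_n, xds i k =
           f (xs i) k + \sum_(p < d) g p (xs i) k * umon (us i) (alpha p).
  by move=> i hi; have [a _ b] := hdata i hi.
have hE' := constructed_sound heta hf hg hdata' hx0 hfM hgM hE (leqnn N).
have hHP : forall k y, inbox X y -> inbox Pq y -> imem (hIE Pq uq k) (Hf y k).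
  by move=> k y hy hA; apply: (hI_sound alpha heta hf hg N uq k hE' hy hA).
have hLip : forall k y z, inbox X y -> inbox X z ->
    `|Hf y k - Hf z k| <= Lam k * wnorm w (fun l => y l - z l).
  move=> k y z hy hz.
  have hW : 0 <= wnorm w (fun l => y l - z l) by apply: sqrtr_ge0.
  have -> : Hf y k - Hf z k = (f y k - f z k) + \sum_(p < d) (g p y k - g p z k) * c p.
    have es : \sum_(p < d) (g p y k - g p z k) * c p =
        \sum_(p < d) g p y k * c p - \sum_(p < d) g p z k * c p.
      by rewrite -sumrB; apply: eq_bigr => p _; rewrite mulrBl.
    by rewrite es /Hf; ring.
  apply: le_trans (ler_normD _ _) _.
  rewrite /Lam mulrDl mulr_suml; apply: lerD.
    apply: le_trans (hf k y z hy hz) _; apply: ler_wpM2r => //; apply: ler_norm.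
  apply: le_trans (ler_norm_sum _ _ _) _; apply: ler_sum => p _.
  rewrite normrM mulrAC; apply: ler_wpM2r => //.
  apply: le_trans (hg p k y z hy hz) _; apply: ler_wpM2r => //; apply: ler_norm.
have encl := enclosure hw hLam hLip hPq hHP hdt hP hxq hxX hxc hxd.
have sec := second hw hLam hLip hPq hHP hdt hP hxq hxX hxc hxd.
have hq0 : tq <= tq <= tq + dt by rewrite lexx /=; move: hdt; lra.
have hqX := hxX tq hq0.
have hqP := encl tq hq0.
have memJ : forall k l tau, imem (Ival (-1) 1) tau -> imem (J k l) (tau * (w l * Lam k)).
  move=> k l tau ht.
  have hs : forall a, imem (Ival (-1) 1) (tau * sg a) by move=> a; apply: sg_mem.
  have -> : tau * (w l * Lam k) = (tau * sg (fbar k)) * w l * fbar k +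
      \sum_(p < d) ((tau * sg (gbar p k * c p)) * w l * gbar p k) * c p.
    rewrite /Lam mulrDr mulrDr mulr_sumr mulr_sumr; congr (_ + _).
      by rewrite -(sgK (fbar k)); ring.
    by apply: eq_bigr => p _; rewrite -normrM -(sgK (gbar p k * c p)); ring.
  apply: imem_add.
    by apply: imem_mul; [apply: imem_mul; [apply: hs | apply: imem_pt] | apply: imem_pt].
  apply: imem_sum => p _; apply: imem_mul; last exact: imem_pt.
  by apply: imem_mul; [apply: imem_mul; [apply: hs | apply: imem_pt] | apply: imem_pt].
move=> k; rewrite /Rnext.
have hmemq : imem (hIE Rq uq k) (Hf (x tq) k).
  exact: (hI_sound alpha heta hf hg N uq k hE' hqX hxq).
have he := sec k.
move: he.
set Sg := Lam k * \sum_l w l * _.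
move=> he.
have hSg : 0 <= Sg.
  apply: mulr_ge0 => //; apply: sumr_ge0 => l _; apply: mulr_ge0; first exact: ltW.
  by rewrite le_max normr_ge0.
have hd2 : 0 < dt ^+ 2 / 2 by apply: divr_gt0 => //; apply: exprn_gt0.
pose e := x (tq + dt) k - x tq k - dt * Hf (x tq) k.
have he' : `|e| <= Sg * (dt ^+ 2 / 2) by rewrite mulrA.
pose th := if Sg == 0 then 0 else e / (Sg * (dt ^+ 2 / 2)).
have [eth hth] : e = th * Sg * (dt ^+ 2 / 2) /\ -1 <= th <= 1.
  rewrite /th; case: eqP => h.
    move: he'; rewrite h mul0r normr_le0 => /eqP ->.
    by rewrite !mul0r; split => //; rewrite lerN10 ler01.
  have hp : 0 < Sg * (dt ^+ 2 / 2) by apply: mulr_gt0 => //; rewrite lt_def hSg andbT; apply/eqP.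
  split; first by rewrite -mulrA divfK // gt_eqF.
  rewrite -ler_norml normrM normfV (gtr0_norm hp) ler_pdivrMr // mul1r //.
have -> : x (tq + dt) k = x tq k + Hf (x tq) k * dt + (th * Sg) * (dt ^+ 2 / 2).
  by rewrite -eth /e; ring.
apply: imem_add; first by apply: imem_add; [apply: hxq | apply: imem_mul hmemq (imem_pt _)].
apply: imem_mul; last exact: imem_pt.
pose HP := fun l => hIE Pq uq l.
pose v l := if `|ilo (HP l)| <= `|ihi (HP l)| then ihi (HP l) else ilo (HP l).
have hv : forall l, imem (HP l) (v l).
  move=> l; have := hHP l _ hqX hqP; rewrite /imem /v => /andP[a b].
  have hlh : ilo (HP l) <= ihi (HP l) := le_trans a b.
  by case: ifP => _; rewrite lexx ?hlh.
have hvm : forall l, sg (v l) * v l = Num.max `|ilo (HP l)| `|ihi (HP l)|.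
  move=> l; rewrite sgK /v; case: ifP => h; first by rewrite max_r.
  by rewrite max_l // ltW // ltNge h.
have -> : th * Sg = \sum_(l < n) ((th * sg (v l)) * (w l * Lam k)) * v l.
  rewrite /Sg mulr_sumr mulr_sumr; apply: eq_bigr => l _.
  have -> : th * sg (v l) * (w l * Lam k) * v l = th * (Lam k * (w l * (sg (v l) * v l))) by ring.
  by rewrite hvm.
apply: imem_sum => l _; apply: imem_mul; last exact: hv.
apply: memJ; apply: sg_mem; exact: hth.
Qed.
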